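(* Let $p>1$ and let $\varphi:\mathbb{R}^n\to\mathbb{R}\cup\{+\infty\}$ be a proper lower semicontinuous coercive function. If for some $r>0$ and $\lambda\in\mathbb{R}$ we have $\{x:\varphi(x)\le\lambda\}\subseteq\mathbb{B}(0;r)$, then there exists $\hat\gamma>0$ such that for each $\gamma\in(0,\hat\gamma]$, $\{x:\varphi^p_\gamma(x)\le\lambda\}\subseteq\mathbb{B}(0;r)$.
   Context: $\varphi^p_\gamma(x):=\inf_{y\in\mathbb{R}^n}\big(\varphi(y)+\frac{1}{p\gamma}\|x-y\|^p\big)$ (high-order Moreau envelope); $\mathbb{B}(0;r)$ is the open Euclidean ball of radius $r$ centered at the origin. *)

(* Defs.v *)
From HB Require Import structures.
From mathcomp Require Import all_boot all_order all_algebra.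
From mathcomp Require Import all_classical all_reals all_analysis.
Set Implicit Arguments. Unset Strict Implicit. Unset Printing Implicit Defensive.
Import Order.TTheory GRing.Theory Num.Theory.
Local Open Scope classical_set_scope.
Local Open Scope ring_scope.

Definition enorm (R : realType) (n : nat) (x : 'rV[R]_n) : R :=
  Num.sqrt (\sum_(i < n) x ord0 i ^+ 2).

Definition proper_fun (R : realType) (n : nat) (phi : 'rV[R]_n -> \bar R) : Prop :=
  (forall x, phi x != -oo%E) /\ (exists x, phi x != +oo%E).

Definition lsc_fun (R : realType) (n : nat) (phi : 'rV[R]_n -> \bar R) : Prop :=
  forall x (t : R), (t%:E < phi x)%E ->
    exists2 d : R, 0 < d & forall y, enorm (y - x) < d -> (t%:E < phi y)%E.

Definition coercive_fun (R : realType) (n : nat) (phi : 'rV[R]_n -> \bar R) : Prop :=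
  forall M : R, exists rho : R, forall x, rho < enorm x -> (M%:E < phi x)%E.

Definition moreau_env (R : realType) (n : nat) (phi : 'rV[R]_n -> \bar R)
  (p gamma : R) (x : 'rV[R]_n) : \bar R :=
  ereal_inf [set (phi y + ((p * gamma)^-1 * (enorm (x - y)) `^ p)%:E)%E | y in setT].

(* Main.v *)
Require Import Defs.
From HB Require Import structures.
From mathcomp Require Import all_boot all_order all_algebra.
From mathcomp Require Import all_classical all_reals all_analysis.
From mathcomp Require Import ring lra.
Import Order.TTheory GRing.Theory Num.Theory.
Import numFieldNormedType.Exports.
Local Open Scope classical_set_scope.
Local Open Scope ring_scope.

Section H.
Variables (R : realType) (n : nat).
Implicit Types (x y z : 'rV[R]_n).

Definition sq x : R := \sum_(i < n) x ord0 i ^+ 2.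

Lemma sq_ge0 x : 0 <= sq x.
Proof. by apply: sumr_ge0 => i _; exact: sqr_ge0. Qed.

Lemma enorm_ge0 x : 0 <= enorm x.
Proof. exact: sqrtr_ge0. Qed.

Lemma enorm_ltE x (d : R) : 0 < d -> (enorm x < d) = (sq x < d ^+ 2).
Proof.
move=> d0; rewrite /enorm -(ltr_sqrt _ (exprn_gt0 2 d0)) sqrtr_sqr gtr0_norm //.
Qed.

Lemma coord_le_enorm x i : `|x ord0 i| <= enorm x.
Proof.
rewrite /enorm -sqrtr_sqr ler_sqrt ?sq_ge0 //.
rewrite (bigD1 i) //= lerDl; apply: sumr_ge0 => j _; exact: sqr_ge0.
Qed.

Lemma sq_continuous : continuous sq.
Proof.
rewrite /sq; apply: continuous_big; first exact: add_continuous.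
move=> i _ x.
exact: (@continuous_comp _ _ _ (fun M : 'rV[R]_n => M ord0 i) (fun r : R => r ^+ 2) x
  (@coord_continuous _ _ _ ord0 i x) (@exprn_continuous _ _ _)).
Qed.

Lemma ball_rV x (e : R) y : (forall i, `|x ord0 i - y ord0 i| < e) -> 0 < e -> ball x e y.
Proof.
move=> H e0; split => // i j; rewrite (ord1 i) /ball /=; exact: H.
Qed.

Lemma ball_rV_enorm x (e : R) y : enorm (x - y) < e -> ball x e y.
Proof.
move=> H; apply: ball_rV; last by apply: le_lt_trans H; exact: enorm_ge0.
move=> i; apply: le_lt_trans H; have := coord_le_enorm (x - y) i; by rewrite !mxE.
Qed.

Lemma sq_sub_cvg x : (fun y => sq (y - x)) y @[y --> x] --> 0.
Proof.
have -> : 0 = sq (x - x).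
  by rewrite subrr /sq big1 // => i _; rewrite mxE expr0n.
apply: (@continuous_comp _ _ _ (fun y : 'rV[R]_n => y - x) sq x); last exact: sq_continuous.
apply: continuousB; [exact: cvg_id | exact: cst_continuous].
Qed.

Lemma lsc_near (phi : 'rV[R]_n -> \bar R) x t : lsc_fun phi ->
  (t%:E < phi x)%E -> \forall y \near x, (t%:E < phi y)%E.
Proof.
move=> lsc tx; have [d d0 Hd] := lsc x t tx.
have h : \forall y \near x, sq (y - x) < d ^+ 2.
  exact: (@cvgr_lt R _ (nbhs x) _ (fun y => sq (y - x)) 0 (sq_sub_cvg x) (d ^+ 2) (exprn_gt0 2 d0)).
near=> y; apply: (Hd y); rewrite enorm_ltE //; exact: (near h y).
Unshelve. all: end_near.
Qed.

Lemma nbhs_unif (U : set 'rV[R]_n) x : nbhs x U ->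
  exists2 e : R, 0 < e & forall z, ball x e z -> forall y, ball z e y -> U y.
Proof.
move=> /nbhs_ballP [e /= e0 He]; exists (e / 2); first by rewrite divr_gt0.
move=> z xz y zy; apply: He; exact: ball_split xz zy.
Qed.

Lemma box_out (B : R) y : ~ (forall i, `[-B, B]%classic (y ord0 i)) -> B < enorm y.
Proof.
move=> /existsNP [i]; rewrite /= in_itv /= -ler_norml => /negP; rewrite -ltNge => h.
exact: lt_le_trans h (coord_le_enorm _ _).
Qed.

Lemma lower_bound (phi : 'rV[R]_n -> \bar R) : proper_fun phi -> lsc_fun phi ->
  coercive_fun phi -> exists m : R, forall y, (m%:E <= phi y)%E.
Proof.
move=> [pn _] lsc coer.
have [rho Hrho] := coer 0.
pose B := Num.max rho 0.
pose K := [set v : 'rV[R]_n | forall i, `[-B, B]%classic (v ord0 i)].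
have cK : compact K := @rV_compact _ n (fun _ => `[-B, B]%classic) (fun _ => @segment_compact _ (-B) B).
have := (iffLR (compact_near_coveringP K)) cK R (nbhs +oo%R) (fun t z => ((-t)%:E < phi z)%E) _.
move=> /(_ _) H.
have {H} [t Ht] : exists t : R, K `<=` (fun z => ((- t)%:E < phi z)%E).
  apply: (filter_ex (F := nbhs +oo%R)); apply: H => z _.
  have [t0 ht0] : exists t0 : R, ((- t0)%:E < phi z)%E.
    case E: (phi z) => [s| |].
    - by exists (1 - s); rewrite lte_fin opprB ltrBlDr ltrDl.
    - by exists 0; rewrite ltey.
    - by have := pn z; rewrite E.
  exists ([set y | ((- t0)%:E < phi y)%E], [set t | t0 <= t]).
    split; [exact: lsc_near | exact: nbhs_pinfty_ge (num_real t0)].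
  move=> [a b] [/= Ha Hb]; apply: le_lt_trans Ha; rewrite lee_fin lerN2 //.
exists (Num.min (- t) 0) => y.
have [Ky|nKy] := pselect (K y).
  apply: le_trans (ltW (Ht y Ky)); by rewrite lee_fin ge_min lexx.
have rB : rho <= B by rewrite le_max lexx.
have := Hrho y (le_lt_trans rB (@box_out B y nKy)).
move/ltW; apply: le_trans; rewrite lee_fin ge_min lexx orbT //.
Qed.

Lemma box_out' (B : R) y : ~ (forall i, `[-B, B]%classic (y ord0 i)) ->
  exists i, B < `|y ord0 i|.
Proof.
move=> /existsNP [i]; rewrite /= in_itv /= -ler_norml => /negP; rewrite -ltNge => h.
by exists i.
Qed.

Lemma gap (phi : 'rV[R]_n -> \bar R) (r lambda : R) : lsc_fun phi ->
  coercive_fun phi -> 0 < r ->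
  [set x | (phi x <= lambda%:E)%E] `<=` [set x | enorm x < r] ->
  exists2 e : R, 0 < e /\ e < 1 &
    forall x y, r <= enorm x -> enorm (x - y) < e -> ((lambda + e)%:E < phi y)%E.
Proof.
move=> lsc coer r0 sub.
have [rho Hrho] := coer (lambda + 1).
pose B := Num.max rho 0 + 1.
pose K := [set v : 'rV[R]_n | forall i, `[-B, B]%classic (v ord0 i)].
have cK : compact K := @rV_compact _ n (fun _ => `[-B, B]%classic) (fun _ => @segment_compact _ (-B) B).
pose P := fun (i : R) z => r ^+ 2 <= sq z ->
  forall y, enorm (z - y) < i -> ((lambda + i)%:E < phi y)%E.
have := (iffLR (compact_near_coveringP K)) cK R (0^'+) P _.
move=> /(_ _) H.
have {H} [i [[i0 i1] Hi]] : exists i : R, (0 < i /\ i < 1) /\ K `<=` P i.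
  apply: (filter_ex (F := 0^'+)).
  apply: filterI; first by apply: filterI; [exact: nbhs_right_gt | exact: nbhs_right_lt].
  apply: H => z0 _.
  have [lt0|ge0] := ltP (sq z0) (r ^+ 2).
    exists ([set z | sq z < r ^+ 2], setT); first split.
    - exact: (@cvgr_lt R _ (nbhs z0) _ sq (sq z0) (@sq_continuous z0) _ lt0).
    - exact: filterT.
    by move=> [a b] [/= Ha _]; rewrite /P leNgt Ha.
  have [e e0 he] : exists2 e : R, 0 < e & ((lambda + e)%:E < phi z0)%E.
    have : ~ (phi z0 <= lambda%:E)%E.
      by move=> /sub /=; rewrite enorm_ltE // ltNge ge0.
    move/negP; rewrite -ltNge.
    case E: (phi z0) => [s| |] // ls.
    - exists ((s - lambda) / 2); first by rewrite divr_gt0 // subr_gt0 -lte_fin.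
      rewrite lte_fin -lte_fin; move: ls; rewrite !lte_fin => ls.
      rewrite -subr_gt0; have -> : s - (lambda + (s - lambda) / 2) = (s - lambda) / 2 by field.
      by rewrite divr_gt0 // subr_gt0.
    - by exists 1 => //; rewrite ltey.
  have [e' e'0 He'] := @nbhs_unif [set y | ((lambda + e)%:E < phi y)%E] z0 (@lsc_near phi z0 (lambda + e) lsc he).
  exists ([set z | ball z0 e' z], [set i | 0 < i /\ i < Num.min e e']); first split.
  - exact: nbhsx_ballx.
  - by apply: filterI; [exact: nbhs_right_gt | apply: nbhs_right_lt; rewrite lt_min e0 e'0].
  move=> [z i] [/= zb [ip]]; rewrite lt_min => /andP[ie ie'] _ y hy.
  have /= := He' z zb y (le_ball (ltW ie') (@ball_rV_enorm z i y hy)).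
  apply: le_lt_trans; rewrite lee_fin lerD2l; exact: ltW.
exists i => //; move=> x y rx hxy.
have [Kx|nKx] := pselect (K x).
  apply: (Hi x Kx) => //; rewrite leNgt -enorm_ltE // -leNgt //.
have [j Hj] := @box_out' B x nKx.
have : rho < enorm y.
  apply: lt_le_trans (coord_le_enorm y j).
  have hj : `|x ord0 j - y ord0 j| < 1.
    apply: le_lt_trans (lt_trans hxy i1); have := coord_le_enorm (x - y) j; by rewrite !mxE.
  have : `|x ord0 j| <= `|y ord0 j| + `|x ord0 j - y ord0 j|.
    by rewrite -{1}(subrK (y ord0 j) (x ord0 j)) addrC ler_normD.
  have : rho <= Num.max rho 0 by rewrite le_max lexx.
  rewrite /B in Hj; lra.
move=> /Hrho; apply: le_lt_trans; rewrite lee_fin lerD2l; exact: ltW.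
Qed.

End H.

Theorem proposition3 (R : realType) (n : nat) (p : R) (phi : 'rV[R]_n -> \bar R)
  (r lambda : R) :
  1 < p -> proper_fun phi -> lsc_fun phi -> coercive_fun phi -> 0 < r ->
  [set x | (phi x <= lambda%:E)%E] `<=` [set x | enorm x < r] ->
  exists2 ghat : R, 0 < ghat &
    forall gamma : R, 0 < gamma -> gamma <= ghat ->
      [set x | (moreau_env phi p gamma x <= lambda%:E)%E] `<=` [set x | enorm x < r].
Proof.
move=> p1 [pn pex] lsc coer r0 sub.
have [m Hm] := @lower_bound R n phi (conj pn pex) lsc coer.
have [e [e0 e1] He] := @gap R n phi r lambda lsc coer r0 sub.
have p0 : 0 < p by apply: lt_trans p1.
pose C := lambda + 1 - Num.min m lambda.
have C1 : 1 <= C.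
  rewrite /C; have : Num.min m lambda <= lambda by rewrite ge_min lexx orbT.
  lra.
have ep0 : 0 < e `^ p by apply: powR_gt0.
exists (e `^ p / (2 * p * C)).
  by rewrite divr_gt0 // !mulr_gt0 // (lt_le_trans ltr01 C1).
move=> gamma g0 gle x /= hx; rewrite ltNge; apply/negP => rx.
have : (moreau_env phi p gamma x < (lambda + e)%:E)%E.
  by apply: le_lt_trans hx _; rewrite lte_fin ltrDl.
move/ereal_inf_lt => [_ [y _ <-] hy].
set N := enorm (x - y) `^ p in hy.
have N0 : 0 <= N by apply: powR_ge0.
have pg0 : 0 < p * gamma by rewrite mulr_gt0.
have sm := Hm y.
case E: (phi y) hy sm => [s| |] hy sm; last first.
- by have := pn y; rewrite E.
- by rewrite /= in hy.
rewrite -EFinD lte_fin in hy; rewrite lee_fin in sm.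
have cN0 : 0 <= (p * gamma)^-1 * N by rewrite mulr_ge0 // invr_ge0 ltW.
have hC : (p * gamma)^-1 * N < C.
  rewrite /C; have : Num.min m lambda <= m by rewrite ge_min lexx.
  lra.
have hN : N < C * (p * gamma).
  by rewrite -ltr_pdivrMr // mulrC.
have hg : C * (p * gamma) <= e `^ p / 2.
  have -> : e `^ p / 2 = C * (p * (e `^ p / (2 * p * C))).
    field; apply/andP; split; rewrite gt_eqF //; exact: (lt_le_trans ltr01 C1).
  rewrite ler_wpM2l ?(le_trans ler01 C1) // ler_wpM2l // ltW //.
have key : enorm (x - y) < e.
  rewrite ltNge; apply/negP => eN.
  have : e `^ p <= N.
    apply: ge0_ler_powR; [exact: ltW | by rewrite nnegrE ltW | by rewrite nnegrE sqrtr_ge0 | exact: eN].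
  lra.
have := He x y rx key; rewrite E lte_fin; lra.
Qed.
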